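(* Let $E$ be a finite set and let $f:\{0,1\}^E\to[0,1]$ be an increasing function. For any monotonic measure $\mu$ on $\{0,1\}^E$ and any decision tree $T$, $$\mathrm{Var}_\mu(f)\;\le\;\sum_{e\in E}\delta_e(f,T)\,\mathrm{Cov}_\mu(f,\omega_e),$$ where $\delta_e(f,T):=\mu\big[\exists\, t\le\tau(\omega):\ e_t=e\big]$ is the revealment of $f$ for $T$.
   Context: $\{0,1\}^E$ carries the coordinatewise partial order; $f$ is increasing if $\omega\le\omega'$ implies $f(\omega)\le f(\omega')$. A probability measure $\mu$ on $\{0,1\}^E$ is monotonic if for every $e\in E$, every $F\subset E$, and every $\xi,\zeta\in\{0,1\}^F$ with $\xi\le\zeta$, $\mu[\omega_{e'}=\xi_{e'}\ \forall e'\in F]>0$ and $\mu[\omega_{e'}=\zeta_{e'}\ \forall e'\in F]>0$, one has $\mu[\omega_e=1\mid \omega_{e'}=\xi_{e'}\ \forall e'\in F]\le\mu[\omega_e=1\mid \omega_{e'}=\zeta_{e'}\ \forall e'\in F]$. Let $n=|E|$. For an $n$-tuple $e=(e_1,\dots,e_n)$ write $e_{[t]}=(e_1,\dots,e_t)$ and $\omega_{e_{[t]}}=(\omega_{e_1},\dots,\omega_{e_t})$. A decision tree is a pair $T=(e_1,(\phi_t)_{2\le t\le n})$ where $e_1\in E$ and each $\phi_t$ maps a pair $((e_1,\dots,e_{t-1}),\omega_{(e_1,\dots,e_{t-1})})$ (distinct elements of $E$ and their values) to an element of $E\setminus\{e_1,\dots,e_{t-1}\}$. Given $\omega\in\{0,1\}^E$,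 running $T$ on $\omega$ produces the ordering $(e_1,\dots,e_n)$ of $E$ defined inductively by $e_t=\phi_t((e_1,\dots,e_{t-1}),\omega_{(e_1,\dots,e_{t-1})})$ for $t\ge2$. Set $\tau(\omega)=\tau_{f,T}(\omega):=\min\{t\ge1:\ \forall\omega'\in\{0,1\}^E,\ \omega'_{e_{[t]}}=\omega_{e_{[t]}}\Rightarrow f(\omega')=f(\omega)\}$. *)

(* Defs.v *)
From HB Require Import structures.
From mathcomp Require Import all_boot all_order all_algebra.
Set Implicit Arguments. Unset Strict Implicit. Unset Printing Implicit Defensive.
Import Order.TTheory GRing.Theory Num.Theory.
Local Open Scope ring_scope.

Definition conf (E : finType) := {ffun E -> bool}.

Section Defs.
Variables (R : realFieldType) (E : finType).

Definition is_prob (mu : conf E -> R) :=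
  (forall w, 0 <= mu w) /\ \sum_(w : conf E) mu w = 1.

Definition prob (mu : conf E -> R) (A : pred (conf E)) : R :=
  \sum_(w : conf E | A w) mu w.

Definition expect (mu : conf E -> R) (g : conf E -> R) : R :=
  \sum_(w : conf E) mu w * g w.

Definition variance (mu : conf E -> R) (g : conf E -> R) : R :=
  expect mu (fun w => g w ^+ 2) - expect mu g ^+ 2.

Definition covariance (mu : conf E -> R) (g h : conf E -> R) : R :=
  expect mu (fun w => g w * h w) - expect mu g * expect mu h.

Definition wcoord (e : E) (w : conf E) : R := (w e : nat)%:R.

Definition increasing (f : conf E -> R) :=
  forall w w' : conf E, (forall e, w e <= w' e)%N -> f w <= f w'.

Definition cyl (F : {set E}) (xi : conf E) : pred (conf E) :=
  [pred w : conf E | [forall x in F, w x == xi x]].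

(* monotonic measure; xi, zeta in {0,1}^F are represented by configurations
   on E whose values outside F are irrelevant *)
Definition monotonic (mu : conf E -> R) :=
  forall (e : E) (F : {set E}) (xi zeta : conf E),
    (forall x, x \in F -> (xi x <= zeta x)%N) ->
    0 < prob mu (cyl F xi) -> 0 < prob mu (cyl F zeta) ->
    prob mu [pred w : conf E | cyl F xi w && w e] / prob mu (cyl F xi)
      <= prob mu [pred w : conf E | cyl F zeta w && w e] / prob mu (cyl F zeta).

(* Decision tree T = (e1, (phi_t)_{t>=2}); since t is determined by the length
   of the history, the family phi_t is given by one function phi on histories
   ((e_1,...,e_{t-1}), omega_{(e_1,...,e_{t-1})}) encoded as a list of pairs. *)
Definition dtree_valid (e1 : E) (phi : seq (E * bool) -> E) :=
  forall h : seq (E * bool), uniq (map fst h) -> (0 < size h < #|E|)%N ->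
    phi h \notin map fst h.

Fixpoint dt_run (e1 : E) (phi : seq (E * bool) -> E) (w : conf E) (t : nat)
  : seq E :=
  match t with
  | 0 => [::]
  | t'.+1 =>
      let p := dt_run e1 phi w t' in
      rcons p (if t' is 0 then e1 else phi [seq (x, w x) | x <- p])
  end.

Definition determined (f : conf E -> R) e1 phi (w : conf E) (t : nat) : bool :=
  [forall w' : conf E,
     all (fun x => w' x == w x) (dt_run e1 phi w t) ==> (f w' == f w)].

(* tau(omega) = min { t >= 1 : f determined by omega_{e_[t]} } (t ranges over
   1..|E|, where it always exists for a valid tree) *)
Definition tau (f : conf E -> R) e1 phi (w : conf E) : nat :=
  (find (fun t => determined f e1 phi w t.+1) (iota 0 #|E|)).+1.

Definition revealment (mu : conf E -> R) (f : conf E -> R) e1 phi (e : E) : R :=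
  prob mu [pred w : conf E | e \in dt_run e1 phi w (tau f e1 phi w)].

End Defs.

(* Main.v *)
Require Import Defs.
From HB Require Import structures.
From mathcomp Require Import all_boot all_order all_algebra.
From mathcomp Require Import ring lra.
Set Implicit Arguments. Unset Strict Implicit. Unset Printing Implicit Defensive.
Import Order.TTheory GRing.Theory Num.Theory.
Local Open Scope ring_scope.

Module A.

Section Basics.
Variables (R : realFieldType) (E : finType).
Variable mu : conf E -> R.
Hypothesis mu_ge0 : forall w, 0 <= mu w.

Definition agree (al : seq (E * bool)) (w : conf E) : bool :=
  all (fun p => w p.1 == p.2) al.
Definition restr (S : seq E) (w : conf E) : seq (E * bool) := [seq (s, w s) | s <- S].
Definition mass al : R := \sum_(w | agree al w) mu w.
Definition sm al (g : conf E -> R) : R := \sum_(w | agree al w) mu w * g w.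
Definition cexp al g := sm al g / mass al.
Definition cp al e := mass (rcons al (e, true)) / mass al.
Definition upd (w : conf E) (e : E) (b : bool) : conf E :=
  [ffun x => if x == e then b else w x].

Lemma agree_rcons al p w : agree (rcons al p) w = agree al w && (w p.1 == p.2).
Proof. by rewrite /agree all_rcons andbC. Qed.

Lemma agree_restr S y w : agree (restr S y) w = all (fun s => w s == y s) S.
Proof. by rewrite /agree all_map. Qed.

Lemma agree_restr_self S y : agree (restr S y) y.
Proof. by rewrite agree_restr; apply/allP => s _. Qed.

Lemma agree_restr_sym S y w : agree (restr S y) w = agree (restr S w) y.
Proof. rewrite !agree_restr; apply: eq_all => s; by rewrite eq_sym. Qed.

Lemma restr_eq S y w : agree (restr S y) w -> restr S w = restr S y.
Proof.
rewrite agree_restr => /allP H; apply/eq_in_map => s /H /eqP ->; done.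
Qed.

Lemma restr_rcons_upd S x e b : e \notin S ->
  restr (rcons S e) (upd x e b) = rcons (restr S x) (e, b).
Proof.
move=> he; rewrite /restr map_rcons ffunE eqxx; congr rcons; apply/eq_in_map.
move=> s hs /=; rewrite ffunE; case: eqP => // es.
by move: he; rewrite -es hs.
Qed.

Lemma upd_same (S : seq E) x e b s : e \notin S -> s \in S -> upd x e b s = x s.
Proof. move=> he hs; rewrite ffunE; case: eqP => // es; by move: he; rewrite -es hs. Qed.

Lemma mass_ge0 al : 0 <= mass al.
Proof. by apply: sumr_ge0. Qed.

Lemma mass_split al e :
  mass al = mass (rcons al (e, true)) + mass (rcons al (e, false)).
Proof.
rewrite /mass (bigID (fun w : conf E => w e)) /=; congr (_ + _); apply: eq_bigl => w;
by rewrite agree_rcons /=; case: (w e); rewrite ?andbT ?andbF.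
Qed.

Lemma sm_split al e g :
  sm al g = sm (rcons al (e, true)) g + sm (rcons al (e, false)) g.
Proof.
rewrite /sm (bigID (fun w : conf E => w e)) /=; congr (_ + _); apply: eq_bigl => w;
by rewrite agree_rcons /=; case: (w e); rewrite ?andbT ?andbF.
Qed.

Lemma mass_rcons_le al p : mass (rcons al p) <= mass al.
Proof.
case: p => e b; rewrite [X in _ <= X](mass_split al e).
by case: b; [rewrite lerDl | rewrite lerDr]; apply: mass_ge0.
Qed.

Lemma mass0_mu al w : mass al = 0 -> agree al w -> mu w = 0.
Proof. move=> h0 hw; exact: (psumr_eq0P (fun w _ => mu_ge0 w) h0 hw). Qed.

Lemma mass0_sm al g : mass al = 0 -> sm al g = 0.
Proof.
move=> h0; rewrite /sm big1 // => w hw; by rewrite (mass0_mu h0 hw) mul0r.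
Qed.

Lemma mu_le_mass al w : agree al w -> mu w <= mass al.
Proof.
move=> hw; rewrite /mass (bigD1 w) //= lerDl; apply: sumr_ge0 => *; exact: mu_ge0.
Qed.

Lemma cp_ge0 al e : 0 <= cp al e.
Proof. by rewrite /cp divr_ge0 // mass_ge0. Qed.

Lemma cp_le1 al e : cp al e <= 1.
Proof.
rewrite /cp; have [->|h] := eqVneq (mass al) 0; first by rewrite invr0 mulr0.
have hp : 0 < mass al by rewrite lt0r h mass_ge0.
by rewrite ler_pdivrMr // mul1r mass_rcons_le.
Qed.

Lemma cp_compl al e : mass al != 0 ->
  1 - cp al e = mass (rcons al (e, false)) / mass al.
Proof.
move=> h; rewrite /cp -{1}(divff h) -mulrBl; congr (_ / _).
rewrite (mass_split al e); ring.
Qed.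

Lemma mul_ratio (a m x : R) : (a = 0 -> x = 0) -> a / m * (x / a) = x / m.
Proof.
have [->|ha] := eqVneq a 0; first by move=> ->; rewrite // !mul0r.
move=> _; by rewrite mulrAC mulrCA mulfV // mulr1.
Qed.

Lemma cexp_split al e g : mass al != 0 ->
  cexp al g = cp al e * cexp (rcons al (e, true)) g
            + (1 - cp al e) * cexp (rcons al (e, false)) g.
Proof.
move=> h; rewrite cp_compl // /cp /cexp !mul_ratio; try exact: mass0_sm.
by rewrite (sm_split al e) mulrDl.
Qed.

Lemma towerC (C : conf E -> seq (E * bool)) g :
  (forall x x', agree (C x) x' -> C x' = C x) -> (forall x, agree (C x) x) ->
  \sum_x mu x * g x = \sum_x mu x * cexp (C x) g.
Proof.
move=> H1 H2.
transitivity (\sum_x \sum_w (if agree (C x) w then mu x * (mu w * g w) / mass (C x) else 0)).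
  symmetry; rewrite exchange_big /=; apply: eq_bigr => w _.
  rewrite -big_mkcond /=.
  transitivity (\sum_(x | agree (C w) x) mu x * (mu w * g w) / mass (C w)).
    apply: eq_big => [x|x hx].
      apply/idP/idP => h; first by rewrite (H1 _ _ h) H2.
      by rewrite (H1 _ _ h) H2.
    by rewrite (H1 _ _ hx).
  rewrite -big_distrl /= -big_distrl /= -/(mass (C w)).
  have [h0|hn] := eqVneq (mass (C w)) 0.
    by rewrite (mass0_mu h0 (H2 w)) !mul0r mulr0 mul0r.
  by rewrite mulrAC divff // mul1r.
apply: eq_bigr => x _; rewrite -big_mkcond /= /cexp /sm.
rewrite mulrA big_distrr /= big_distrl /=; apply: eq_bigr => w _.
by rewrite mulrA.
Qed.

Lemma towerS S g : \sum_x mu x * g x = \sum_x mu x * cexp (restr S x) g.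
Proof. apply: towerC => [x x' /restr_eq //|x]; exact: agree_restr_self. Qed.

Lemma cexp_const al g v : (forall w, agree al w -> g w = v) -> mass al != 0 ->
  cexp al g = v.
Proof.
move=> hv hm; rewrite /cexp /sm (eq_bigr (fun w => mu w * v)).
  by rewrite -big_distrl /= -/(mass al) mulrAC divff // mul1r.
by move=> w hw; rewrite hv.
Qed.

Lemma term_child1 al e g v : (forall w, agree (rcons al (e, true)) w -> g w = v) ->
  cp al e * cexp (rcons al (e, true)) g = cp al e * v.
Proof.
move=> hv; have [h0|hn] := eqVneq (mass (rcons al (e, true))) 0.
  by rewrite /cp h0 !mul0r.
by rewrite (cexp_const hv hn).
Qed.

Lemma term_child0 al e g v : mass al != 0 ->
  (forall w, agree (rcons al (e, false)) w -> g w = v) ->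
  (1 - cp al e) * cexp (rcons al (e, false)) g = (1 - cp al e) * v.
Proof.
move=> hm hv; have [h0|hn] := eqVneq (mass (rcons al (e, false))) 0.
  by rewrite cp_compl // h0 !mul0r.
by rewrite (cexp_const hv hn).
Qed.

End Basics.

End A.
Import A.

Module B.

Section Coupling.
Variable R : realFieldType.

Definition mn (a b : R) := if a <= b then a else b.

Definition rho (p r r' : R) (b c c' : bool) : R :=
  match b, c, c' with
  | true, true, true => mn p r
  | true, false, true => mn p r' - mn p r
  | true, false, false => p - mn p r'
  | false, true, true => r - mn p r
  | false, false, true => r' - r - (mn p r' - mn p r)
  | false, false, false => 1 - p - r' + mn p r'
  | _, true, false => 0
  end.

Definition mono p r b c := rho p r r b c c.

Lemma rho_ge0 p r r' b c c' : 0 <= p <= 1 -> 0 <= r -> r <= r' -> r' <= 1 ->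
  0 <= rho p r r' b c c'.
Proof.
move=> /andP[p0 p1] r0 rr r1; rewrite /rho /mn.
have [h1|h1] := leP p r; have [h2|h2] := leP p r'; case: b; case: c; case: c'; lra.
Qed.

Lemma mono_ge0 p r b c : 0 <= p <= 1 -> 0 <= r <= 1 -> 0 <= mono p r b c.
Proof. move=> hp /andP[r0 r1]; exact: rho_ge0. Qed.

Lemma mono_sumb p r c : \sum_(b : bool) mono p r b c = if c then r else 1 - r.
Proof. rewrite big_bool /mono /rho; case: c => /=; ring. Qed.

Lemma mono_sumc p r b : \sum_(c : bool) mono p r b c = if b then p else 1 - p.
Proof. rewrite big_bool /mono /rho; case: b => /=; ring. Qed.

Lemma mono_le_marg p r b c : 0 <= p <= 1 -> 0 <= r <= 1 ->
  mono p r b c <= if c then r else 1 - r.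
Proof.
move=> hp hr; rewrite -(mono_sumb p r c) big_bool.
case: b; [rewrite lerDl | rewrite lerDr]; exact: mono_ge0.
Qed.

Lemma lip_step (p r r' : R) (A B : bool -> bool -> R) (D D' : bool -> R) :
  0 <= p <= 1 -> 0 <= r -> r <= r' -> r' <= 1 ->
  (forall b c c', rho p r r' b c c' != 0 -> `|A b c - B b c'| <= D' c' - D c) ->
  `|\sum_(b : bool) \sum_(c : bool) mono p r b c * A b c
    - \sum_(b : bool) \sum_(c : bool) mono p r' b c * B b c|
  <= (r' * D' true + (1 - r') * D' false) - (r * D true + (1 - r) * D false).
Proof.
move=> hp r0 rr r1 H.
have -> : \sum_(b : bool) \sum_(c : bool) mono p r b c * A b c
    - \sum_(b : bool) \sum_(c : bool) mono p r' b c * B b c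
  = \sum_(b : bool) \sum_(c : bool) \sum_(c' : bool)
      rho p r r' b c c' * (A b c - B b c').
  by rewrite !big_bool /mono /rho /=; ring.
have -> : (r' * D' true + (1 - r') * D' false) - (r * D true + (1 - r) * D false)
  = \sum_(b : bool) \sum_(c : bool) \sum_(c' : bool)
      rho p r r' b c c' * (D' c' - D c).
  by rewrite !big_bool /rho /=; ring.
apply: (le_trans (ler_norm_sum _ _ _)); apply: ler_sum => b _.
apply: (le_trans (ler_norm_sum _ _ _)); apply: ler_sum => c _.
apply: (le_trans (ler_norm_sum _ _ _)); apply: ler_sum => c' _.
have h0 := rho_ge0 b c c' hp r0 rr r1.
rewrite normrM ger0_norm //.
have [->|hn] := eqVneq (rho p r r' b c c') 0; first by rewrite !mul0r.
by apply: ler_wpM2l => //; apply: H.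
Qed.

Lemma indep_step (p r : R) (A : bool -> bool -> R) (D1 D0 : R) :
  0 <= p <= 1 -> 0 <= r <= 1 ->
  (0 < r -> r < 1 -> forall b, `|A b true - A b false| <= D1 - D0) ->
  \sum_(b : bool) \sum_(c : bool)
      ((if b then p else 1 - p) * (if c then r else 1 - r)) * A b c
  - \sum_(b : bool) \sum_(c : bool) mono p r b c * A b c
  <= 2 * (r * (1 - r) * (D1 - D0)).
Proof.
move=> /andP[p0 p1] /andP[r0 r1] H.
have -> : \sum_(b : bool) \sum_(c : bool)
      ((if b then p else 1 - p) * (if c then r else 1 - r)) * A b c
  - \sum_(b : bool) \sum_(c : bool) mono p r b c * A b c
  = (mn p r - p * r) * ((A true false - A true true) + (A false true - A false false)).
  by rewrite !big_bool /mono /rho /=; ring.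
have dd0 : 0 <= mn p r - p * r by rewrite /mn; have [h|h] := leP p r; nra.
have ddr : mn p r - p * r <= r * (1 - r) by rewrite /mn; have [h|h] := leP p r; nra.
have Hz : r = 0 \/ r = 1 -> mn p r - p * r = 0.
  by case=> ->; rewrite /mn; have [h|h] := leP p _; lra.
have [rz|rz] := eqVneq r 0.
  by rewrite Hz ?rz; [rewrite !mul0r mulr0 | left].
have [ro|ro] := eqVneq r 1.
  by rewrite Hz ?ro; [rewrite subrr ?(mul0r, mulr0) | right].
move: (mn p r - p * r) dd0 ddr => dd dd0 ddr.
have rp : 0 < r by rewrite lt0r rz.
have rl : r < 1 by rewrite lt_neqAle ro.
have h1 := H rp rl true; have h2 := H rp rl false.
have e1 : A true false - A true true <= D1 - D0.
  by apply: le_trans h1; rewrite -normrN opprB ler_norm.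
have e2 : A false true - A false false <= D1 - D0 by apply: le_trans h2; apply: ler_norm.
have hD : 0 <= D1 - D0 by apply: le_trans h1.
have : dd * ((A true false - A true true) + (A false true - A false false)) <= dd * (2 * (D1 - D0)).
  by apply: ler_wpM2l => //; lra.
move=> h; apply: le_trans h _; rewrite mulrCA; apply: ler_wpM2l; first lra.
by apply: ler_wpM2r.
Qed.

Lemma rho_sum1 p r r' b c : \sum_(c' : bool) rho p r r' b c c' = mono p r b c.
Proof. rewrite big_bool /mono /rho; case: b; case: c => /=; ring. Qed.

Lemma rho_sum2 p r r' b c' : \sum_(c : bool) rho p r r' b c c' = mono p r' b c'.
Proof. rewrite big_bool /mono /rho; case: b; case: c' => /=; ring. Qed.

Lemma rho_le1 p r r' b c c' : 0 <= p <= 1 -> 0 <= r -> r <= r' -> r' <= 1 ->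
  rho p r r' b c c' <= mono p r b c.
Proof.
move=> *; rewrite -(rho_sum1 p r r' b c) big_bool.
by case: c'; [rewrite lerDl | rewrite lerDr]; apply: rho_ge0.
Qed.

Lemma rho_le2 p r r' b c c' : 0 <= p <= 1 -> 0 <= r -> r <= r' -> r' <= 1 ->
  rho p r r' b c c' <= mono p r' b c'.
Proof.
move=> *; rewrite -(rho_sum2 p r r' b c') big_bool.
by case: c; [rewrite lerDl | rewrite lerDr]; apply: rho_ge0.
Qed.

Lemma rho_ord p r r' b c c' : rho p r r' b c c' != 0 -> c ==> c'.
Proof. by case: b; case: c; case: c' => //=; rewrite eqxx. Qed.

End Coupling.

End B.
Import B.

Module D.

Section Alg.
Variable R : realFieldType.

Lemma cov_alg (a11 a10 a01 a00 u11 u10 u01 u00 : R) :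
  0 <= a11 -> 0 <= a10 -> 0 <= a01 -> 0 <= a00 ->
  (a11 + a10 = 0 -> u11 = 0 /\ u10 = 0) -> (a01 + a00 = 0 -> u01 = 0 /\ u00 = 0) ->
  0 < a11 + a10 + (a01 + a00) ->
  (0 < a11 + a10 -> 0 < a01 + a00 -> (u01 + u00) / (a01 + a00) <= (u11 + u10) / (a11 + a10)) ->
  (0 < a11 + a10 -> 0 < a01 + a00 -> a01 / (a01 + a00) <= a11 / (a11 + a10)) ->
  (a11 + a10) / (a11 + a10 + (a01 + a00)) * ((a10 * u11 - a11 * u10) / (a11 + a10) ^+ 2)
  + (a01 + a00) / (a11 + a10 + (a01 + a00)) * ((a00 * u01 - a01 * u00) / (a01 + a00) ^+ 2)
  <= ((a10 + a00) * (u11 + u01) - (a11 + a01) * (u10 + u00)) / (a11 + a10 + (a01 + a00)) ^+ 2.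
Proof.
move=> h11 h10 h01 h00 hu1 hu0 hM hF hq.
have [z1|n1] := eqVneq (a11 + a10) 0.
  have e11 : a11 = 0 by lra.
  have e10 : a10 = 0 by lra.
  case: (hu1 z1) => e1 e2; rewrite e1 e2 e11 e10 !add0r in hM *.
  rewrite !(mul0r, mulr0, subr0, add0r, addr0, sub0r) divff ?mul1r // gt_eqF //.
have [z0|n0] := eqVneq (a01 + a00) 0.
  have e01 : a01 = 0 by lra.
  have e00 : a00 = 0 by lra.
  case: (hu0 z0) => e1 e2; rewrite e1 e2 e01 e00 !addr0 in hM *.
  rewrite !(mul0r, mulr0, subr0, add0r, addr0, sub0r) divff ?mul1r // gt_eqF //.
have p1 : 0 < a11 + a10 by rewrite lt0r n1 addr_ge0.
have p0 : 0 < a01 + a00 by rewrite lt0r n0 addr_ge0.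
have nM : a11 + a10 + (a01 + a00) != 0 by rewrite gt_eqF.
rewrite -subr_ge0.
have -> : ((a10 + a00) * (u11 + u01) - (a11 + a01) * (u10 + u00)) / (a11 + a10 + (a01 + a00)) ^+ 2
  - ((a11 + a10) / (a11 + a10 + (a01 + a00)) * ((a10 * u11 - a11 * u10) / (a11 + a10) ^+ 2)
  + (a01 + a00) / (a11 + a10 + (a01 + a00)) * ((a00 * u01 - a01 * u00) / (a01 + a00) ^+ 2))
  = (a11 + a10) * (a01 + a00) / (a11 + a10 + (a01 + a00)) ^+ 2
    * ((u11 + u10) / (a11 + a10) - (u01 + u00) / (a01 + a00))
    * (a11 / (a11 + a10) - a01 / (a01 + a00)).
  by field; rewrite n1 n0 nM.
apply: mulr_ge0; [apply: mulr_ge0|]; rewrite ?subr_ge0; auto.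
by rewrite divr_ge0 ?exprn_ge0 ?mulr_ge0 // ?addr_ge0 // ltW.
Qed.
End Alg.

End D.
Import D.

Section Main.
Variables (R : realFieldType) (E : finType) (mu : conf E -> R) (f : conf E -> R)
  (e1 : E) (phi : seq (E * bool) -> E).
Hypotheses (mu_ge0 : forall w, 0 <= mu w) (hf01 : forall w, 0 <= f w <= 1)
  (hfinc : increasing f) (hmono : monotonic mu) (hT : dtree_valid e1 phi)
  (hsum : \sum_w mu w = 1).

Local Notation mass := (mass mu).
Local Notation sm := (sm mu).
Local Notation cexp := (cexp mu).
Local Notation cp := (cp mu).

Definition nxt (h : seq (E * bool)) : E := if h is [::] then e1 else phi h.

Fixpoint H (d : nat) (S : seq E) (x y : conf E) : R :=
  match d with
  | 0 => `|f x - f y|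
  | d'.+1 => let e := nxt (restr S x) in
    \sum_(b : bool) \sum_(c : bool)
      mono (cp (restr S x) e) (cp (restr S y) e) b c
      * H d' (rcons S e) (upd x e b) (upd y e c)
  end.

Definition good (S : seq E) d := uniq S && (size S + d == #|E|)%N.

Lemma map_fst_restr (S : seq E) (x : conf E) : map fst (restr S x) = S.
Proof. by rewrite /restr -map_comp map_id. Qed.

Lemma nxt_notin (S : seq E) (x : conf E) d : good S d.+1 -> nxt (restr S x) \notin S.
Proof.
case/andP=> hu /eqP hs; case: S hu hs => [|s S] hu hs //=.
have := hT (h := restr (s :: S) x); rewrite map_fst_restr; apply=> //.
by rewrite size_map -hs /= addnS ltnS leq_addr.
Qed.

Lemma good_step (S : seq E) d (x : conf E) : good S d.+1 -> good (rcons S (nxt (restr S x))) d.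
Proof.
move=> hg; have hn := nxt_notin x hg; case/andP: hg => hu /eqP hs.
by rewrite /good rcons_uniq hn hu size_rcons addSn -addnS hs /=.
Qed.

Lemma good0_cover S : good S 0 -> forall s, s \in S.
Proof.
case/andP=> hu /eqP; rewrite addn0 => hs s.
have hc : #|S| = #|predT : {pred E}| by rewrite (card_uniqP hu) hs.
by have := subset_cardP hc (subset_predT _) => /(_ s) ->.
Qed.

Lemma cover_agree (S : seq E) (y w : conf E) : (forall s, s \in S) -> agree (restr S y) w = (w == y).
Proof.
move=> hc; rewrite agree_restr; apply/allP/eqP => [h|-> s _ //].
by apply/ffunP => s; apply/eqP/h.
Qed.

Lemma sm_cover (S : seq E) (y : conf E) g : (forall s, s \in S) -> sm (restr S y) g = mu y * g y.
Proof.
move=> hc; rewrite /A.sm (eq_bigl (pred1 y)) ?big_pred1_eq // => w.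
by rewrite cover_agree.
Qed.

Lemma mass_cover (S : seq E) (y : conf E) : (forall s, s \in S) -> mass (restr S y) = mu y.
Proof.
move=> hc; rewrite /A.mass (eq_bigl (pred1 y)) ?big_pred1_eq // => w.
by rewrite cover_agree.
Qed.

Lemma mem_rcons_cases (S : seq E) e s : s \in rcons S e -> s = e \/ s \in S.
Proof. by rewrite mem_rcons in_cons => /orP[/eqP ->|]; [left|right]. Qed.

Lemma upd_agree (S : seq E) e (x x' : conf E) b : {in S, x =1 x'} ->
  {in rcons S e, upd x e b =1 upd x' e b}.
Proof. by move=> h s hs; rewrite !ffunE; case: eqP => // ne; case: (mem_rcons_cases hs) => // /h. Qed.

Lemma restr_in (S : seq E) (x x' : conf E) : {in S, x =1 x'} -> restr S x = restr S x'.
Proof. by move=> h; apply/eq_in_map => s /h ->. Qed.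

Lemma Hinv d (S : seq E) (x x' y y' : conf E) : good S d -> {in S, x =1 x'} -> {in S, y =1 y'} ->
  H d S x y = H d S x' y'.
Proof.
elim: d S x x' y y' => [|d IH] S x x' y y' hg hx hy /=.
  have hc := good0_cover hg.
  have -> : x = x' by apply/ffunP => s; apply: hx.
  by have -> : y = y' by apply/ffunP => s; apply: hy.
rewrite (restr_in hx) (restr_in hy); apply: eq_bigr => b _; apply: eq_bigr => c _.
congr (_ * _); apply: IH; first by rewrite -(restr_in hx); exact: good_step.
  exact: upd_agree. exact: upd_agree.
Qed.

Lemma Hdiag d (S : seq E) (x y : conf E) : good S d -> {in S, x =1 y} -> H d S x y = 0.
Proof.
elim: d S x y => [|d IH] S x y hg hxy /=.
  have -> : x = y by apply/ffunP => s; apply: hxy (good0_cover hg s).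
  by rewrite subrr normr0.
rewrite (restr_in hxy) !big_bool.
set p := cp _ _.
have m10 : mono p p true false = 0 by rewrite /mono /rho /mn lexx subrr.
have m01 : mono p p false true = 0 by rewrite /mono /rho /mn lexx subrr.
rewrite m10 m01 !mul0r !IH ?(mul0r, mulr0, addr0) //.
- by rewrite /= !addr0.
all: try (rewrite -(restr_in hxy); exact: good_step).
all: exact: upd_agree.


Qed.

Lemma hp01 al e : 0 <= cp al e <= 1.
Proof. by rewrite (cp_ge0 mu_ge0) ?(cp_le1 mu_ge0). Qed.

Lemma ratio_pos_nz (a m : R) : 0 < a / m -> a != 0.
Proof. by apply: contraTneq => ->; rewrite mul0r ltxx. Qed.

Lemma pos_child (al : seq (E * bool)) e c : 0 < mass al ->
  0 < (if c then cp al e else 1 - cp al e) -> 0 < mass (rcons al (e, c)).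
Proof.
move=> hm; have hm0 : mass al != 0 by rewrite gt_eqF.
case: c => h; rewrite lt0r (mass_ge0 mu_ge0) // andbT.
  exact: (ratio_pos_nz h).
by move: h; rewrite cp_compl // => /ratio_pos_nz.
Qed.

Lemma mono_pos_marg (p r : R) b c : 0 <= p <= 1 -> 0 <= r <= 1 ->
  mono p r b c != 0 -> 0 < (if c then r else 1 - r).
Proof.
move=> hp hr hn; have h0 := mono_ge0 b c hp hr.
apply: lt_le_trans (mono_le_marg b c hp hr); by rewrite lt0r hn h0.
Qed.

Lemma cexp_cover (S : seq E) (y : conf E) g : (forall s, s \in S) ->
  0 < mass (restr S y) -> cexp (restr S y) g = g y.
Proof.
move=> hc; rewrite /A.cexp sm_cover // mass_cover // => hm.
by rewrite mulrAC divff ?mul1r // gt_eqF.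
Qed.

Lemma Hdet d (S : seq E) (x y : conf E) cst : good S d -> 0 < mass (restr S y) ->
  (forall w, agree (restr S x) w -> f w = cst) ->
  H d S x y = cexp (restr S y) (fun w => `|cst - f w|).
Proof.
elim: d S x y => [|d IH] S x y hg hm hdet.
  have hc := good0_cover hg.
  by rewrite /= cexp_cover // (hdet x (agree_restr_self _ _)).
rewrite /=; set e := nxt (restr S x); have he : e \notin S := nxt_notin x hg.
set p := cp (restr S x) e; set r := cp (restr S y) e.
transitivity (\sum_(b : bool) \sum_(c : bool) mono p r b c
              * cexp (rcons (restr S y) (e, c)) (fun w => `|cst - f w|)).
  apply: eq_bigr => b _; apply: eq_bigr => c _.
  have [->|hn] := eqVneq (mono p r b c) 0; first by rewrite !mul0r.
  congr (_ * _); rewrite IH; first by rewrite restr_rcons_upd.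
  - exact: good_step.
  - by rewrite restr_rcons_upd //; apply: pos_child hm (mono_pos_marg (hp01 _ _) (hp01 _ _) hn).
  - by move=> w; rewrite restr_rcons_upd // agree_rcons => /andP[hw _]; exact: hdet.
rewrite exchange_big /=.
under eq_bigr => c _ do rewrite -big_distrl /= mono_sumb.
by rewrite big_bool /= -(cexp_split mu_ge0) // gt_eqF.
Qed.

Lemma cp_mono (S : seq E) (y y' : conf E) e : {in S, forall s, y s ==> y' s} ->
  0 < mass (restr S y) -> 0 < mass (restr S y') ->
  cp (restr S y) e <= cp (restr S y') e.
Proof.
move=> hyy hm hm'.
have hcyl z w : cyl [set s in S] z w = agree (restr S z) w.
  rewrite /cyl /= agree_restr; apply/forall_inP/allP => h s hs.
    by apply: h; rewrite inE.
  by apply: h; rewrite inE in hs.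
have h1 z : prob mu (cyl [set s in S] z) = mass (restr S z).
  by rewrite /prob /A.mass; apply: eq_bigl => w; rewrite hcyl.
have h2 z : prob mu [pred w | cyl [set s in S] z w && w e]
          = mass (rcons (restr S z) (e, true)).
  by rewrite /prob /A.mass; apply: eq_bigl => w; rewrite /= hcyl agree_rcons /= eqb_id.
have := hmono e (F := [set s in S]) (xi := y) (zeta := y').
rewrite /cp !h1 !h2; apply=> // s; rewrite inE => /hyy.
by case: (y s); case: (y' s).
Qed.

Lemma Hlip d (S : seq E) (x y y' : conf E) : good S d ->
  {in S, forall s, y s ==> y' s} -> 0 < mass (restr S y) -> 0 < mass (restr S y') ->
  `|H d S x y - H d S x y'| <= cexp (restr S y') f - cexp (restr S y) f.
Proof.
elim: d S x y y' => [|d IH] S x y y' hg hyy hm hm'.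
  have hc := good0_cover hg.
  rewrite /= !cexp_cover //.
  have hle : f y <= f y'.
    apply: hfinc => s; move: (hyy s (hc s)); by case: (y s); case: (y' s).
  apply: le_trans (ler_dist_dist _ _) _.
  have -> : f x - f y - (f x - f y') = f y' - f y by ring.
  by rewrite ger0_norm // subr_ge0.
rewrite /=; set e := nxt (restr S x); have he : e \notin S := nxt_notin x hg.
set p := cp (restr S x) e; set r := cp (restr S y) e; set r' := cp (restr S y') e.
have hrr : r <= r' by apply: cp_mono.
have /andP[r0 _] := hp01 (restr S y) e; have /andP[_ r1] := hp01 (restr S y') e.
have := @lip_step _ p r r' (fun b c => H d (rcons S e) (upd x e b) (upd y e c))
   (fun b c => H d (rcons S e) (upd x e b) (upd y' e c))
   (fun c => cexp (rcons (restr S y) (e, c)) f)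
   (fun c => cexp (rcons (restr S y') (e, c)) f) (hp01 _ _) r0 hrr r1.
rewrite -!(cexp_split mu_ge0) ?gt_eqF //; apply=> b c c' hn.
have hr0 := rho_ge0 b c c' (hp01 (restr S x) e) r0 hrr r1.
have hrp : 0 < rho p r r' b c c' by rewrite lt0r hn hr0.
have hm1 : mono p r b c != 0.
  by rewrite gt_eqF //; apply: lt_le_trans hrp (rho_le1 _ _ _ (hp01 _ _) r0 hrr r1).
have hm2 : mono p r' b c' != 0.
  by rewrite gt_eqF //; apply: lt_le_trans hrp (rho_le2 _ _ _ (hp01 _ _) r0 hrr r1).
have hcc := rho_ord hn.
rewrite -[rcons (restr S y) _](restr_rcons_upd y _ he)
        -[rcons (restr S y') _](restr_rcons_upd y' _ he).
apply: IH.
- exact: good_step.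
- move=> s /mem_rcons_cases [->|hs]; rewrite !ffunE ?eqxx //.
  case: eqP => [es|_]; last exact: hyy.
  by move: he; rewrite -es hs.
- by rewrite restr_rcons_upd //; apply: pos_child hm (mono_pos_marg (hp01 _ _) (hp01 _ _) hm1).
- by rewrite restr_rcons_upd //; apply: pos_child hm' (mono_pos_marg (hp01 _ _) (hp01 _ _) hm2).
Qed.

Definition Q d (S : seq E) (x : conf E) := \sum_y mu y * H d S x y.
Definition ccov (al : seq (E * bool)) e :=
  cp al e * (1 - cp al e) * (cexp (rcons al (e, true)) f - cexp (rcons al (e, false)) f).
Definition Kc (S : seq E) e := \sum_y mu y * ccov (restr S y) e.

Lemma agree_in (T : seq E) (z w : conf E) : agree (restr T z) w -> {in T, w =1 z}.
Proof. by rewrite agree_restr => /allP h s /h /eqP. Qed.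

Lemma mass_pos_mu (S : seq E) (y : conf E) : mu y != 0 -> 0 < mass (restr S y).
Proof.
move=> hy; apply: lt_le_trans (mu_le_mass mu_ge0 (agree_restr_self S y)).
by rewrite lt0r hy mu_ge0.
Qed.

Lemma node_ineq d (S : seq E) (x : conf E) : good S d.+1 ->
  cp (restr S x) (nxt (restr S x)) * Q d (rcons S (nxt (restr S x))) (upd x (nxt (restr S x)) true)
  + (1 - cp (restr S x) (nxt (restr S x)))
    * Q d (rcons S (nxt (restr S x))) (upd x (nxt (restr S x)) false)
  <= Q d.+1 S x + 2 * Kc S (nxt (restr S x)).
Proof.
move=> hg; set e := nxt (restr S x); set p := cp (restr S x) e.
have he : e \notin S := nxt_notin x hg.
have hg' : good (rcons S e) d := good_step x hg.
pose A y b c := H d (rcons S e) (upd x e b) (upd y e c).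
have hQ b : Q d (rcons S e) (upd x e b) = \sum_y mu y *
    (cp (restr S y) e * A y b true + (1 - cp (restr S y) e) * A y b false).
  rewrite /Q (towerS mu_ge0 S); apply: eq_bigr => y _.
  have [->|hy] := eqVneq (mu y) 0; first by rewrite !mul0r.
  have hm : mass (restr S y) != 0 by rewrite gt_eqF // mass_pos_mu.
  congr (_ * _); rewrite ((cexp_split mu_ge0) _ e) //; congr (_ + _).
    apply: term_child1 => w; rewrite -(restr_rcons_upd y true he) => /agree_in hw.
    by apply: Hinv => //.
  apply: term_child0 => // w; rewrite -(restr_rcons_upd y false he) => /agree_in hw.
  by apply: Hinv => //.
rewrite !hQ /Kc /Q !mulr_sumr -!big_split /=; apply: ler_sum => y _.
have [->|hy] := eqVneq (mu y) 0; first by rewrite !(mul0r, mulr0, addr0).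
have hm := mass_pos_mu S hy.
set r := cp (restr S y) e.
have hr := hp01 (restr S y) e; have hp := hp01 (restr S x) e.
have := @indep_step _ p r (A y) (cexp (rcons (restr S y) (e, true)) f)
           (cexp (rcons (restr S y) (e, false)) f) hp hr.
have hH : H d.+1 S x y = \sum_(b : bool) \sum_(c : bool) mono p r b c * A y b c by [].
rewrite -hH => h.
have {}h : \sum_(b : bool) \sum_(c : bool) ((if b then p else 1 - p) * (if c then r else 1 - r)) * A y b c
   <= H d.+1 S x y + 2 * ccov (restr S y) e.
  rewrite -lerBlDl /ccov -/r; apply: h => rp rl b.
  rewrite /A distrC -!(restr_rcons_upd y _ he); apply: Hlip => //.
  - move=> s /mem_rcons_cases [->|hs]; rewrite !ffunE ?eqxx //.
    by case: eqP => // _; rewrite implybb.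
  - by rewrite restr_rcons_upd //; apply: pos_child hm _; rewrite subr_gt0.
  - by rewrite restr_rcons_upd //; apply: pos_child hm _.
have -> : p * (mu y * (r * A y true true + (1 - r) * A y true false))
   + (1 - p) * (mu y * (r * A y false true + (1 - r) * A y false false))
   = mu y * \sum_(b : bool) \sum_(c : bool) ((if b then p else 1 - p) * (if c then r else 1 - r)) * A y b c.
  by rewrite !big_bool /=; ring.
rewrite [2 * (mu y * _)]mulrCA -mulrDr; apply: ler_wpM2l => //.
Qed.

Lemma mass_swap (al : seq (E * bool)) p q :
  mass (rcons (rcons al p) q) = mass (rcons (rcons al q) p).
Proof. by apply: eq_bigl => w; rewrite !agree_rcons andbAC. Qed.

Lemma sm_swap (al : seq (E * bool)) p q g :
  sm (rcons (rcons al p) q) g = sm (rcons (rcons al q) p) g.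
Proof. by apply: eq_bigl => w; rewrite !agree_rcons andbAC. Qed.

Lemma ccov_formula (al : seq (E * bool)) e : ccov al e =
  (mass (rcons al (e, false)) * sm (rcons al (e, true)) f
   - mass (rcons al (e, true)) * sm (rcons al (e, false)) f) / mass al ^+ 2.
Proof.
have [h0|hm] := eqVneq (mass al) 0.
  by rewrite /ccov /A.cp h0 invr0 !mulr0 !mul0r expr0n /= invr0 mulr0.
rewrite /ccov cp_compl // /A.cp /A.cexp.
have [h1|n1] := eqVneq (mass (rcons al (e, true))) 0.
  by rewrite h1 (mass0_sm mu_ge0 _ h1) !(mul0r, mulr0, subr0).
have [h2|n2] := eqVneq (mass (rcons al (e, false))) 0.
  by rewrite h2 (mass0_sm mu_ge0 _ h2) !(mul0r, mulr0, subr0, sub0r, oppr0).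
by field; rewrite hm n1 n2.
Qed.

Lemma covdecomp (be : seq (E * bool)) s e : 0 < mass be ->
  (0 < mass (rcons be (s, true)) -> 0 < mass (rcons be (s, false)) ->
     cexp (rcons be (s, false)) f <= cexp (rcons be (s, true)) f) ->
  (0 < mass (rcons be (s, true)) -> 0 < mass (rcons be (s, false)) ->
     cp (rcons be (s, false)) e <= cp (rcons be (s, true)) e) ->
  cp be s * ccov (rcons be (s, true)) e + (1 - cp be s) * ccov (rcons be (s, false)) e
  <= ccov be e.
Proof.
move=> hM hF hq.
pose a b c := mass (rcons (rcons be (s, b)) (e, c)).
pose u b c := sm (rcons (rcons be (s, b)) (e, c)) f.
have hN b : mass (rcons be (s, b)) = a b true + a b false by rewrite /a; exact: mass_split.
have hS b : sm (rcons be (s, b)) f = u b true + u b false by rewrite /u; exact: sm_split.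
have hE c : mass (rcons be (e, c)) = a true c + a false c.
  by rewrite /a (mass_split _ _ s); congr (_ + _); apply: mass_swap.
have hES c : sm (rcons be (e, c)) f = u true c + u false c.
  by rewrite /u (sm_split _ _ s); congr (_ + _); apply: sm_swap.
have hMM : mass be = a true true + a true false + (a false true + a false false).
  by rewrite (mass_split _ be s) !hN.
rewrite /A.cexp /A.cp !hN !hS in hF hq.
rewrite !ccov_formula cp_compl ?gt_eqF // /A.cp !hN !hE !hES hMM.
rewrite hMM in hM.
have ha b c : 0 <= a b c by apply: (mass_ge0 mu_ge0).
have hz b : a b true + a b false = 0 -> u b true = 0 /\ u b false = 0.
  move=> hz; have := ha b true; have := ha b false => h1 h2.
  have z1 : a b true = 0 by lra.
  have z2 : a b false = 0 by lra.
  by rewrite /u !(mass0_sm mu_ge0).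
by apply: cov_alg => //; [apply: hz | apply: hz].
Qed.

Lemma size_le_card (S : seq E) : uniq S -> (size S <= #|E|)%N.
Proof. by move=> hu; rewrite -(card_uniqP hu) max_card. Qed.

Lemma Kc_rcons (S : seq E) s e : uniq (rcons S s) -> Kc (rcons S s) e <= Kc S e.
Proof.
move=> hu; have hs : s \notin S by move: hu; rewrite rcons_uniq => /andP[].
have hg : good (rcons S s) (#|E| - size (rcons S s)).
  by rewrite /good hu /= subnKC // size_le_card.
rewrite /Kc (towerS mu_ge0 S); apply: ler_sum => y _.
have [->|hy] := eqVneq (mu y) 0; first by rewrite !mul0r.
have hm := mass_pos_mu S hy.
apply: ler_wpM2l => //.
have hr b w : agree (rcons (restr S y) (s, b)) w ->
    ccov (restr (rcons S s) w) e = ccov (rcons (restr S y) (s, b)) e.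
  rewrite agree_rcons => /andP[hw /eqP hws]; rewrite /restr map_rcons -/(restr S w).
  by rewrite (restr_eq hw) /= hws.
rewrite ((cexp_split mu_ge0) _ s) ?gt_eqF //.
rewrite (@term_child1 _ _ mu _ _ _ (ccov (rcons (restr S y) (s, true)) e)); last exact: hr.
rewrite (term_child0 (v := ccov (rcons (restr S y) (s, false)) e)) ?gt_eqF //; last exact: hr.
have hord : {in rcons S s, forall t, upd y s false t ==> upd y s true t}.
  move=> t /mem_rcons_cases [->|ht]; rewrite !ffunE ?eqxx //.
  by case: eqP => // _; rewrite implybb.
apply: covdecomp => // h1 h0.
  have := Hlip y hg hord; rewrite !restr_rcons_upd // => h.
  by rewrite -subr_ge0; apply: le_trans (normr_ge0 _) (h h0 h1).
by have := cp_mono e hord; rewrite !restr_rcons_upd //; apply.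
Qed.

Lemma cov_base (e : E) : covariance mu f (@wcoord R E e) = ccov [::] e.
Proof.
have hm : mass [::] = 1 by rewrite -hsum.
rewrite ccov_formula hm expr1n divr1 /covariance /expect.
have hw : forall w : conf E, @wcoord R E e w = (w e)%:R by [].
have -> : \sum_w mu w * (f w * @wcoord R E e w) = sm [:: (e, true)] f.
  rewrite (bigID (fun w : conf E => w e)) /= [X in _ + X]big1 ?addr0.
    apply: eq_big => [w|w hwe]; first by rewrite /agree /= andbT eqb_id.
    by rewrite hw hwe mulr1.
  by move=> w /negbTE he; rewrite hw he mulr0 mulr0.
have -> : \sum_w mu w * @wcoord R E e w = mass [:: (e, true)].
  rewrite (bigID (fun w : conf E => w e)) /= [X in _ + X]big1 ?addr0.
    apply: eq_big => [w|w hwe]; first by rewrite /agree /= andbT eqb_id.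
    by rewrite hw hwe mulr1.
  by move=> w /negbTE he; rewrite hw he mulr0.
have -> : \sum_w mu w * f w = sm [::] f by [].
rewrite (sm_split _ [::] e) /=.
have := mass_split mu [::] e; rewrite hm /= => h1.
have -> : mass [:: (e, false)] = 1 - mass [:: (e, true)] by rewrite h1; ring.
ring.
Qed.

Lemma Kc_le (S : seq E) e : uniq S -> e \notin S -> Kc S e <= covariance mu f (@wcoord R E e).
Proof.
elim/last_ind: S => [|S s IH] hu he.
  rewrite cov_base /Kc (eq_bigr (fun y => mu y * ccov [::] e)) // -big_distrl /=.
  by rewrite hsum mul1r.
have hu' : uniq S by move: hu; rewrite rcons_uniq => /andP[].
have he' : e \notin S by move: he; rewrite mem_rcons in_cons negb_or => /andP[].
exact: le_trans (Kc_rcons e hu) (IH hu' he').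
Qed.

Local Notation n := #|E|.
Local Notation S_ x t := (dt_run e1 phi x t).

Lemma nxt_rcons h p : nxt (rcons h p) = phi (rcons h p).
Proof. by case: h. Qed.

Lemma dt_run_S x t : S_ x t.+1 = rcons (S_ x t) (nxt (restr (S_ x t) x)).
Proof.
case: t => [//|t]; rewrite [LHS]/= -/(dt_run e1 phi x t.+1).
by rewrite [dt_run e1 phi x t.+1]/= /restr map_rcons nxt_rcons.
Qed.

Lemma size_dt x t : size (S_ x t) = t.
Proof. by elim: t => [//|t IH]; rewrite dt_run_S size_rcons IH. Qed.

Lemma good_dt x t : (t <= n)%N -> good (S_ x t) (n - t).
Proof.
elim: t => [_|t IH ht]; first by rewrite /good /= subn0.
have h1 : good (S_ x t) (n - t.+1).+1 by rewrite subnSK //; apply: IH; apply: ltnW.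
by rewrite dt_run_S; apply: good_step.
Qed.

Lemma dt_agree x x' t : agree (restr (S_ x t) x) x' -> S_ x' t = S_ x t.
Proof.
elim: t => [//|t IH]; rewrite dt_run_S /restr map_rcons agree_rcons -/(restr _ x).
case/andP=> h _; rewrite dt_run_S IH //; by rewrite (restr_eq h).
Qed.

Lemma dt_prefix x s t : (s <= t)%N -> {subset S_ x s <= S_ x t}.
Proof.
elim: t => [|t IH]; first by rewrite leqn0 => /eqP ->.
rewrite leq_eqVlt => /orP[/eqP -> //|hs] y /(IH hs) hy.
by rewrite dt_run_S mem_rcons in_cons hy orbT.
Qed.

Lemma det_iff x t : determined f e1 phi x t <->
  (forall w, agree (restr (S_ x t) x) w -> f w = f x).
Proof.
split.
  move/forallP=> h w hw; move: (h w); rewrite -agree_restr hw /=.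
  by move/eqP.
move=> h; apply/forallP => w; rewrite -agree_restr; apply/implyP => hw.
by rewrite (h w hw).
Qed.

Lemma n_gt0 : (0 < n)%N.
Proof. by apply/card_gt0P; exists e1. Qed.

Lemma det_n x : determined f e1 phi x n.
Proof.
apply/det_iff => w; have hc := good0_cover (etrans (f_equal (good _) (esym (subnn n))) (good_dt x (leqnn n))).
by rewrite cover_agree // => /eqP ->.
Qed.

Lemma has_det x : has (fun t => determined f e1 phi x t.+1) (iota 0 n).
Proof.
apply/hasP; exists n.-1; first by rewrite mem_iota add0n prednK ?n_gt0 // leqnn.
by rewrite prednK ?n_gt0 //; apply: det_n.
Qed.

Lemma tau_le x : (tau f e1 phi x <= n)%N.
Proof. by have := has_det x; rewrite has_find size_iota. Qed.

Lemma tau_det x : forall w, agree (restr (S_ x (tau f e1 phi x)) x) w -> f w = f x.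
Proof.
apply/det_iff; have h := nth_find 0%N (has_det x).
have hl := has_det x; rewrite has_find size_iota in hl.
by rewrite nth_iota ?add0n // in h.
Qed.

Lemma find_ge_eq (a1 a2 : pred nat) (s : seq nat) t :
  (forall i, (i < t)%N -> a1 (nth 0%N s i) = a2 (nth 0%N s i)) ->
  (t <= find a1 s)%N = (t <= find a2 s)%N.
Proof.
elim: s t => [|y s IH] [|t] h //=.
have -> : a1 y = a2 y by exact: (h 0%N).
case: (a2 y) => //; rewrite !ltnS; apply: IH => i hi; exact: (h i.+1).
Qed.

Lemma det_agree x x' s : agree (restr (S_ x s) x) x' ->
  determined f e1 phi x' s = determined f e1 phi x s.
Proof.
move=> hx; have e := dt_agree hx; have er := restr_eq hx.
apply/idP/idP.
  move/det_iff => h; apply/det_iff => w hw.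
  have hx' : f x = f x' by apply: h; rewrite e er; exact: agree_restr_self.
  by rewrite hx'; apply: h; rewrite e er.
move/det_iff => h; apply/det_iff => w; rewrite e er => hw.
by rewrite (h w hw) (h x' hx).
Qed.

Lemma agree_sub x x' s t : (s <= t)%N -> agree (restr (S_ x t) x) x' ->
  agree (restr (S_ x s) x) x'.
Proof.
move=> hst; rewrite !agree_restr => /allP h; apply/allP => y hy.
by apply: h; apply: dt_prefix hst _ hy.
Qed.

Lemma tau_agree x x' t : (t <= n)%N -> agree (restr (S_ x t) x) x' ->
  (t < tau f e1 phi x')%N = (t < tau f e1 phi x)%N.
Proof.
move=> htn hx; rewrite /tau !ltnS; apply: find_ge_eq => i hi.
rewrite nth_iota ?add0n; last by apply: leq_trans hi htn.
by apply: det_agree; apply: agree_sub hx.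
Qed.

Local Notation tau x := (tau f e1 phi x).

Lemma sm_const al g v : (forall w, agree al w -> g w = v) -> sm al g = mass al * v.
Proof.
move=> hv; rewrite /A.sm (eq_bigr (fun w => mu w * v)); first by rewrite -big_distrl.
by move=> w hw; rewrite hv.
Qed.

Definition Qt x t := Q (n - t) (S_ x t) x.

Lemma Qinv d (T : seq E) (x x' : conf E) : good T d -> {in T, x =1 x'} -> Q d T x = Q d T x'.
Proof. by move=> hg hx; apply: eq_bigr => y _; rewrite (Hinv hg hx (y' := y)). Qed.

Lemma Qt0 x : Qt x 0 = 0.
Proof.
rewrite /Qt /Q big1 // => y _; rewrite Hdiag ?mulr0 //.
by have := good_dt x (leq0n n).
Qed.

Lemma Qtau x : Qt x (tau x) = \sum_y mu y * `|f x - f y|.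
Proof.
rewrite /Qt /Q (towerS mu_ge0 (S_ x (tau x)) (fun y => `|f x - f y|)).
apply: eq_bigr => y _; have [->|hy] := eqVneq (mu y) 0; first by rewrite !mul0r.
congr (_ * _); apply: Hdet; first exact: good_dt (tau_le x).
  exact: mass_pos_mu.
exact: tau_det.
Qed.

Lemma step_ineq t : (t < n)%N ->
  \sum_x mu x * (if (t < tau x)%N then
      Qt x t.+1 - Qt x t - 2 * Kc (S_ x t) (nxt (restr (S_ x t) x)) else 0) <= 0.
Proof.
move=> htn.
rewrite (towerC mu_ge0 (C := fun x => restr (S_ x t) x)); first last.
- by move=> x; apply: agree_restr_self.
- by move=> x x' h; rewrite (dt_agree h); apply: restr_eq.
apply: sumr_le0 => x _; apply: mulr_ge0_le0 => //.
rewrite /A.cexp; apply: mulr_le0_ge0; last by rewrite invr_ge0 (mass_ge0 mu_ge0).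
set S := S_ x t; set e := nxt (restr S x).
have hg0 : good S (n - t) by apply: good_dt; apply: ltnW.
have hnt : (n - t = (n - t.+1).+1)%N by rewrite subnSK.
have hg : good S (n - t.+1).+1 by rewrite -hnt.
have he : e \notin S := nxt_notin x hg.
pose v b := if (t < tau x)%N then Q (n - t.+1) (rcons S e) (upd x e b) - Q (n - t) S x
   - 2 * Kc S e else 0.
have hv b : forall w, agree (rcons (restr S x) (e, b)) w ->
   (if (t < tau w)%N then
      Qt w t.+1 - Qt w t - 2 * Kc (S_ w t) (nxt (restr (S_ w t) w)) else 0) = v b.
  move=> w; rewrite agree_rcons => /andP[hw /eqP hwe].
  rewrite (tau_agree (ltnW htn) hw) /v; case: ifP => // _.
  have hSw : S_ w t = S by apply: dt_agree.
  have hrw : restr S w = restr S x by apply: restr_eq.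
  rewrite /Qt dt_run_S hSw hrw -/e.
  have hin : {in S, w =1 x} by apply: agree_in.
  rewrite (Qinv hg0 hin); congr (_ - _ - _).
  apply: Qinv; first by rewrite -/e; apply: good_step.
  move=> s /mem_rcons_cases [->|hs]; first by rewrite ffunE eqxx.
  rewrite ffunE; case: eqP => [es|_]; last exact: hin.
  by move: he; rewrite -es hs.
rewrite (sm_split _ _ e) (sm_const (hv true)) (sm_const (hv false)) /v.
case: ifP => _; last by rewrite !mulr0 addr0.
have [h0|hm] := eqVneq (mass (restr S x)) 0.
  have z1 : mass (rcons (restr S x) (e, true)) = 0.
    by apply/eqP; rewrite eq_le (mass_ge0 mu_ge0) andbT -h0 (mass_rcons_le mu_ge0).
  have z0 : mass (rcons (restr S x) (e, false)) = 0.
    by apply/eqP; rewrite eq_le (mass_ge0 mu_ge0) andbT -h0 (mass_rcons_le mu_ge0).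
  by rewrite z1 z0 !mul0r addr0.
have m1 : mass (rcons (restr S x) (e, true)) = cp (restr S x) e * mass (restr S x).
  by rewrite /A.cp divfK.
have m0 : mass (rcons (restr S x) (e, false)) = (1 - cp (restr S x) e) * mass (restr S x).
  by rewrite cp_compl // divfK.
have hni := node_ineq x hg; rewrite -/e -hnt in hni.
rewrite m1 m0.
set p := cp (restr S x) e.
set Q1 := Q _ _ (upd x e true) in hni *; set Q0 := Q _ _ (upd x e false) in hni *.
set QQ := Q (n - t) S x in hni *; set K := Kc S e in hni *.
have -> : p * mass (restr S x) * (Q1 - QQ - 2 * K) + (1 - p) * mass (restr S x) * (Q0 - QQ - 2 * K)
   = mass (restr S x) * ((p * Q1 + (1 - p) * Q0) - (QQ + 2 * K)) by ring.
apply: mulr_ge0_le0; first exact: (mass_ge0 mu_ge0).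
by rewrite subr_le0.
Qed.

Lemma sum_tau x (F : nat -> R) : \sum_(0 <= t < n) (if (t < tau x)%N then F t else 0)
  = \sum_(0 <= t < tau x) F t.
Proof.
rewrite (big_cat_nat (leq0n (tau x)) (tau_le x)) /=.
rewrite [X in _ + X]big_nat_cond [X in _ + X]big1 ?addr0.
  by apply: eq_big_nat => i /andP[_ ->].
by move=> i /andP[/andP[h _] _]; rewrite ltnNge h.
Qed.

Lemma main_bound : \sum_x mu x * (\sum_y mu y * `|f x - f y|)
  <= 2 * \sum_x mu x * \sum_(0 <= t < n)
     (if (t < tau x)%N then Kc (S_ x t) (nxt (restr (S_ x t) x)) else 0).
Proof.
have e x : \sum_y mu y * `|f x - f y|
    = \sum_(0 <= t < n) (if (t < tau x)%N then Qt x t.+1 - Qt x t else 0).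
  by rewrite sum_tau telescope_sumr // Qt0 subr0 Qtau.
under eq_bigr => x _ do rewrite e mulr_sumr.
rewrite mulr_sumr; under [X in _ <= X]eq_bigr => x _ do rewrite !mulr_sumr.
rewrite exchange_big /= [X in _ <= X]exchange_big /=.
apply: ler_sum_nat => t /andP[_ ht].
rewrite -subr_le0 -sumrB; apply: le_trans (step_ineq ht); apply: ler_sum => x _.
by rewrite le_eqVlt; apply/orP; left; apply/eqP; case: ifP => _; ring.
Qed.

Lemma sum_run x (c : E -> R) m :
  \sum_(0 <= t < m) c (nxt (restr (S_ x t) x)) = \sum_(e <- S_ x m) c e.
Proof.
elim: m => [|m IH]; first by rewrite big_geq // big_nil.
by rewrite big_nat_recr // IH dt_run_S big_rcons.
Qed.

Lemma var_bound : 2 * variance mu f <= \sum_x mu x * (\sum_y mu y * `|f x - f y|).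
Proof.
set A := expect mu f; set B := expect mu (fun w => f w ^+ 2).
have h1 x : \sum_y mu y * (f x - f y) ^+ 2 = f x ^+ 2 - 2 * f x * A + B.
  transitivity (\sum_y (f x ^+ 2 * mu y - (2 * f x) * (mu y * f y) + mu y * f y ^+ 2)).
    by apply: eq_bigr => y _; ring.
  by rewrite big_split sumrB /= -!mulr_sumr hsum mulr1.
have h2 : \sum_x mu x * \sum_y mu y * (f x - f y) ^+ 2 = 2 * variance mu f.
  transitivity (\sum_x (mu x * f x ^+ 2 - (2 * A) * (mu x * f x) + B * mu x)).
    by apply: eq_bigr => x _; rewrite h1; ring.
  rewrite big_split sumrB /= -!mulr_sumr hsum mulr1 /variance -/A -/B.
  rewrite /B /A /expect /=; ring.
rewrite -h2; apply: ler_sum => x _; apply: ler_wpM2l => //.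
apply: ler_sum => y _; apply: ler_wpM2l => //.
have hb : `|f x - f y| <= 1.
  have := hf01 x; have := hf01 y => /andP[? ?] /andP[? ?].
  by rewrite ler_norml; apply/andP; split; lra.
rewrite -(real_normK (num_real (f x - f y))) expr2.
by rewrite -[X in _ <= X]mulr1; apply: ler_wpM2l.
Qed.

Lemma final : variance mu f <=
  \sum_(e : E) revealment mu f e1 phi e * covariance mu f (@wcoord R E e).
Proof.
have h := le_trans var_bound main_bound.
rewrite -(ler_pM2l (ltr0Sn R 1)); apply: le_trans h _; apply: ler_wpM2l => //.
have step : \sum_x mu x * \sum_(0 <= t < n)
     (if (t < tau x)%N then Kc (S_ x t) (nxt (restr (S_ x t) x)) else 0)
  <= \sum_x mu x * \sum_(e <- S_ x (tau x)) covariance mu f (@wcoord R E e).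
  apply: ler_sum => x _; apply: ler_wpM2l => //.
  rewrite sum_tau -sum_run; apply: ler_sum_nat => t /andP[_ ht].
  have htn : (t < n)%N by apply: leq_trans ht (tau_le x).
  have hg : good (S_ x t) (n - t.+1).+1 by rewrite subnSK //; apply: good_dt; apply: ltnW.
  apply: Kc_le; first by case/andP: hg.
  exact: (nxt_notin x hg).
apply: le_trans step _; rewrite le_eqVlt; apply/orP; left; apply/eqP.
rewrite /revealment /prob.
transitivity (\sum_e \sum_x
   (if e \in S_ x (tau x) then mu x * covariance mu f (@wcoord R E e) else 0)); last first.
  by apply: eq_bigr => e _; rewrite big_distrl [RHS]big_mkcond; apply: eq_bigr => x _.
rewrite exchange_big; apply: eq_bigr => x _.
have hu : uniq (S_ x (tau x)) by case/andP: (good_dt x (tau_le x)).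
by rewrite -big_mkcond -big_distrr (big_uniq _ hu).
Qed.


End Main.

Theorem theorem1p1 (R : realFieldType) (E : finType) (f : conf E -> R)
  (hf01 : forall w, 0 <= f w <= 1) (hfinc : increasing f)
  (mu : conf E -> R) (hmu : is_prob mu) (hmono : monotonic mu)
  (e1 : E) (phi : seq (E * bool) -> E) (hT : dtree_valid e1 phi) :
  variance mu f <=
    \sum_(e : E) revealment mu f e1 phi e * covariance mu f (@wcoord R E e).
Proof.
case: hmu => h0 h1; exact: (final h0 hf01 hfinc hmono hT h1).
Qed.
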